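(* Let $S,I:\mathbb{R}\to\mathbb{R}$ be $2\pi$-periodic Lipschitz functions and suppose there are $\alpha_0\in(0,\pi)$, $p,q\ge1$, $c_1,c_2>0$, $c_3\in(0,1]$ with $S(\theta)\le-c_1(\pi-\theta)^p$ for $\theta\in[\alpha_0,\pi]$, $S(\theta)\ge c_1(\theta+\pi)^p$ for $\theta\in[-\pi,-\alpha_0]$, $0\le I(\theta)\le c_2(\pi-|\theta|)^q$ for $\theta\in[-\pi,\pi]$, and $\min_{|\phi|\le\max\{|\theta|,\alpha_0\}}I(\phi)\ge c_3I(\theta)$ for $\theta\in[-\pi,\pi]$. Let $(\theta_i(t))$ solve $\dot\theta_i=\omega_i+\frac{\kappa}{N}\sum_{j=1}^NI(\theta_j)S(\theta_i)$, $\theta_i(0)=\theta_i^0$, and $R(t)=\frac1N\sum_jI(\theta_j(t))$. For $\mathcal B\subseteq\{1,\dots,N\}$ let $\|\Omega_{\mathcal B}\|_\infty=\max_{i\in\mathcal B}|\omega_i|$. Suppose $0<\rho\le\|I\|_{\sup}$ and $\mathcal A\subset\mathcal B\subset\{1,\dots,N\}$ satisfy \[ \frac1N\sum_{i\in\mathcal A}I(\theta_i^0)>\frac{\rho}{c_3},\qquad\kappa>\frac{\|\Omega_{\mathcal B}\|_\infty}{\rho c_1(\pi-\alpha_0)^p}, \] and, with $d=\left(\frac{\|\Omega_{\mathcal B}\|_\infty}{\kappa\rho c_1}\right)^{1/p}$, $\theta_i^0\in[-\pi+d,\pi-d]$ for all $i\in\mathcal A$. Then (a) $R(t)>\rho$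 for $t\ge0$; (b) $\theta_i(t)\in[-\pi+d,\pi-d]$ for $i\in\mathcal A$ and $t\ge0$; (c) $\sup_{t\ge0}\theta_i(t)-\inf_{t\ge0}\theta_i(t)<2\pi$ for $i\in\mathcal B$.
   Context: $\|I\|_{\sup}=\sup|I|$. *)

(* Defs.v *)
From HB Require Import structures.
From mathcomp Require Import all_boot all_order all_algebra.
From mathcomp Require Import all_classical all_reals all_analysis.
Set Implicit Arguments. Unset Strict Implicit. Unset Printing Implicit Defensive.
Import Order.TTheory GRing.Theory Num.Theory.
Import numFieldNormedType.Exports.
Local Open Scope classical_set_scope.
Local Open Scope ring_scope.

Definition periodic2pi {R : realType} (f : R -> R) : Prop :=
  forall x, f (x + 2 * pi) = f x.

Definition lipschitz_fun {R : realType} (f : R -> R) : Prop :=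
  exists L : R, forall x y, `|f x - f y| <= L * `|x - y|.

Definition supnorm {R : realType} (f : R -> R) : R :=
  sup [set `|f x| | x in [set: R]].

Definition maxabs {R : realType} {N : nat} (om : 'I_N -> R) (B : {set 'I_N}) : R :=
  \big[Num.max/0]_(i in B) `|om i|.

Definition orderR {R : realType} {N : nat} (I : R -> R) (th : 'I_N -> R -> R) (t : R) : R :=
  (N%:R)^-1 * \sum_(j < N) I (th j t).

(* Main.v *)
Require Import Defs.
From HB Require Import structures.
From mathcomp Require Import all_boot all_order all_algebra.
From mathcomp Require Import all_classical all_reals all_analysis.
From mathcomp Require Import ring lra.
Import Order.TTheory GRing.Theory Num.Theory.
Import numFieldNormedType.Exports.
Local Open Scope classical_set_scope.
Local Open Scope ring_scope.

Set Implicit Arguments.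
Unset Strict Implicit.
Section Aux.
Context {R : realType}.
Implicit Types f : R -> R.
Lemma per_nat f : periodic2pi f -> forall x (n : nat), f (x + 2 * pi * n%:R) = f x.
Proof.
move=> hf x; elim=> [|n IH]; first by rewrite mulr0 addr0.
rewrite -IH -(hf (x + 2 * pi * n%:R)); congr f.
by rewrite -[n.+1]addn1 natrD mulrDr mulr1 addrA.
Qed.

Lemma per_int f : periodic2pi f -> forall x (k : int), f (x + 2 * pi * k%:~R) = f x.
Proof.
move=> hf x [n|n]; first exact: per_nat.
have := per_nat hf (x - 2 * pi * n.+1%:R) n.+1; rewrite subrK => ->; congr f.
rewrite NegzE mulrNz mulrN; congr (_ - _).
Qed.

Lemma reduce_mod (x a : R) : exists k : int,
  a <= x - 2 * pi * k%:~R < a + 2 * pi.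
Proof.
have pi2 : 0 < 2 * pi :> R by rewrite mulr_gt0 ?pi_gt0.
set t := (x - a) / (2 * pi).
have xt : x - a = t * (2 * pi) by rewrite /t divfK ?gt_eqF.
exists (Num.floor t).
have h1 := floor_le t; have h2 := floorD1_gt t.
rewrite rmorphD /= in h2.
set k := (Num.floor t)%:~R in h1 h2 *.
have e1 : k * (2 * pi) <= t * (2 * pi) by rewrite ler_pM2r.
have e2 : t * (2 * pi) < (k + 1) * (2 * pi) by rewrite ltr_pM2r.
apply/andP; split; nra.
Qed.

Lemma last_time (f : R -> R) (t0 t1 b : R) : t0 <= t1 ->
  {within `[t0, t1], continuous f} -> f t0 <= b -> b < f t1 ->
  exists s, [/\ t0 <= s < t1, f s <= b & forall t, s < t <= t1 -> b < f t].
Proof.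
move=> t01 cf f0 f1.
set E := [set t | t0 <= t <= t1 /\ f t <= b].
have E0 : E t0 by split => //; rewrite lexx t01.
have ubE : ubound E t1 by move=> t [/andP[]].
have hs : has_sup E by split; [exists t0 | exists t1].
set s := sup E.
have sub : ubound E s := sup_upper_bound hs.
have t0s : t0 <= s := sub _ E0.
have st1 : s <= t1 := ge_sup (ex_intro _ t0 E0) ubE.
have after : forall t, s < t <= t1 -> b < f t.
  move=> t /andP[st tt1]; rewrite ltNge; apply/negP => ftb.
  have : t <= s by apply: sub; split => //; rewrite tt1 andbT (le_trans t0s (ltW st)).
  by rewrite leNgt st.
have fs : f s <= b.
  rewrite leNgt; apply/negP => bfs.
  have sin : [set` `[t0, t1]] s by rewrite /= in_itv /= t0s st1.
  have := (proj1 (subspace_continuousP _ _) cf s sin).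
  move=> /cvgr_gt /(_ _ bfs).
  rewrite near_withinE.
  move=> [d /= d0 hd].
  have [e Ee se] := sup_adherent d0 hs.
  case: Ee => /andP[t0e et1] feb.
  have : b < f e.
    apply: hd; last by rewrite /= in_itv /= t0e et1.
    rewrite /= ger0_norm ?subr_ge0 ?(sub e) //; first by rewrite ltrBlDr addrC -ltrBlDr.
    by split => //; rewrite t0e.
  by rewrite ltNge feb.
exists s; split => //; rewrite t0s /= lt_neqAle st1 andbT.
by apply/eqP => est; move: fs; rewrite est leNgt f1.
Qed.

Lemma first_time (h : R -> R) (a t1 : R) : a <= t1 ->
  {within `[a, t1], continuous h} -> 0 < h a -> h t1 <= 0 ->
  exists s, [/\ a < s <= t1, h s <= 0 & forall t, a <= t < s -> 0 < h t].
Proof.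
move=> at1 ch ha ht1.
set E := [set t | a <= t <= t1 /\ forall u, a <= u <= t -> 0 < h u].
have Ea : E a.
  split; first by rewrite lexx at1.
  by move=> u; rewrite -eq_le => /eqP <-.
have ubE : ubound E t1 by move=> t [/andP[]].
have hs : has_sup E by split; [exists a | exists t1].
set s := sup E.
have sub : ubound E s := sup_upper_bound hs.
have as_ : a <= s := sub _ Ea.
have st1 : s <= t1 := ge_sup (ex_intro _ a Ea) ubE.
have before : forall t, a <= t < s -> 0 < h t.
  move=> t /andP[hat ts]; have [y [_ Hy] ty] := sup_gt (ex_intro _ a Ea) ts.
  by apply: Hy; rewrite hat (ltW ty).
have hsle : h s <= 0.
  rewrite leNgt; apply/negP => hs0.
  have sin : [set` `[a, t1]] s by rewrite /= in_itv /= as_ st1.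
  have := (proj1 (subspace_continuousP _ _) ch s sin).
  move=> /cvgr_gt /(_ _ hs0).
  rewrite near_withinE.
  move=> [d /= d0 hd].
  set u' := Num.min (s + d / 2) t1.
  have Eu : E u'.
    have sd : s <= s + d / 2 by rewrite lerDl divr_ge0 // ltW.
    split.
      by rewrite /u' le_min (le_trans as_ sd) at1 /= ge_min lexx orbT.
    move=> u /andP[au uu']; have [us|su] := ltP u s; first by apply: before; rewrite au us.
    move: uu'; rewrite le_min => /andP[ud ut1].
    apply: hd; last by rewrite /= in_itv /= au ut1.
    rewrite /= ler0_norm ?subr_le0 // opprB.
    lra.
  have := sub _ Eu; rewrite /u' ge_min => /orP[|t1s].
    move=> h2; have : 0 < d / 2 by rewrite divr_gt0.
    lra.
  have est : s = t1 by apply/eqP; rewrite eq_le st1 t1s.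
  by move: hs0; rewrite est ltNge ht1.
exists s; split => //; rewrite st1 andbT lt_neqAle as_ andbT.
by apply/eqP => eas; move: hsle; rewrite -eas leNgt ha.
Qed.

Lemma barrier (f g : R -> R) (t0 T b C : R) : 0 <= C ->
  {within `[t0, +oo[, continuous f} ->
  (forall t, t0 < t -> is_derive t 1 f (g t)) ->
  (forall t, t0 < t < T -> b < f t -> g t <= C * (f t - b)) ->
  f t0 <= b -> forall t, t0 <= t <= T -> f t <= b.
Proof.
move=> C0 cf df hg f0 t1 /andP[t01 t1T]; rewrite leNgt; apply/negP => ft1.
have subW : forall a c, t0 <= a -> `[a, c] `<=` `[t0, +oo[.
  move=> a c ta x; rewrite /= !in_itv /= andbT => /andP[ax _]; exact: le_trans ax.
have cf01 : {within `[t0, t1], continuous f}.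
  exact: continuous_subspaceW (subW _ _ (lexx _)) cf.
have [s [/andP[t0s st1] fs after]] := @last_time f t0 t1 b t01 cf01 f0 ft1.
set k := (2 * (C + 1))^-1.
have k0 : 0 < k by rewrite invr_gt0; lra.
set t2 := Num.min t1 (s + k).
have st2 : s < t2 by rewrite lt_min st1 /= ltrDl.
have t2t1 : t2 <= t1 by rewrite ge_min lexx.
have t2sk : t2 <= s + k by rewrite ge_min lexx orbT.
have cf2 : {within `[s, t2], continuous f}.
  exact: continuous_subspaceW (subW _ _ t0s) cf.
have [m mI fm] := EVT_max (ltW st2) cf2.
move: (mI); rewrite in_itv /= => /andP[sm' mt2].
have ft2 : b < f t2 by apply: after; rewrite st2 t2t1.
have fmt2 : f t2 <= f m by apply: fm; rewrite in_itv /= (ltW st2) lexx.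
set M2 := f m - b.
have M2pos : 0 < M2 by rewrite /M2; lra.
have sm : s < m.
  rewrite lt_neqAle sm' andbT; apply/eqP => esm; move: M2pos; rewrite /M2 -esm; lra.
set eta := M2 / 4.
have eta0 : 0 < eta by rewrite divr_gt0.
have sin : [set` `[t0, +oo[] s by rewrite /= in_itv /= t0s.
have := (proj1 (subspace_continuousP _ _) cf s sin).
move=> /cvgr_lt /(_ (f s + eta)); rewrite ltrDl => /(_ eta0).
rewrite near_withinE => -[d /= d0 hd].
set u := s + Num.min d (m - s) / 2.
have md0 : 0 < Num.min d (m - s) by rewrite lt_min d0 subr_gt0.
have hmd1 : Num.min d (m - s) <= d by rewrite ge_min lexx.
have hmd2 : Num.min d (m - s) <= m - s by rewrite ge_min lexx orbT.
have su : s < u by rewrite /u ltrDl divr_gt0.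
have um : u < m by rewrite /u; lra.
have fu : f u < f s + eta.
  apply: hd; last by rewrite /= in_itv /= andbT; lra.
  rewrite /= ler0_norm ?subr_le0; last by rewrite ltW.
  rewrite /u; lra.
have cfu : {within `[u, m], continuous f}.
  exact: continuous_subspaceW (subW _ _ (ltW (le_lt_trans t0s su))) cf.
have dfu : forall x, x \in `]u, m[ -> is_derive x 1 f (g x).
  move=> x; rewrite in_itv /= => /andP[ux _]; apply: df; lra.
have [c cI hc] := MVT um dfu cfu.
move: cI; rewrite in_itv /= => /andP[uc cm].
have fcb : b < f c by apply: after; apply/andP; split; lra.
have hgc : g c <= C * (f c - b) by apply: hg; [apply/andP; split; lra | exact: fcb].
have fcm : f c <= f m by apply: fm; rewrite in_itv /=; apply/andP; split; lra.
have e1 : g c <= C * M2.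
  apply: (le_trans hgc); apply: ler_wpM2l => //; rewrite /M2; lra.
have e2 : g c * (m - u) <= C * M2 * (m - u) by apply: ler_wpM2r => //; lra.
have e3 : C * M2 * (m - u) <= C * M2 * k.
  by apply: ler_wpM2l; [rewrite mulr_ge0 // ltW | lra].
have e4 : C * M2 * k = M2 / 2 - M2 * k.
  rewrite /k; field; lra.
have e5 : 0 < M2 * k by rewrite mulr_gt0.
have hM2 : M2 = f m - b by []. move: hc; rewrite /eta in fu; lra.
Qed.

Lemma lip_cont (f : R -> R) (L : R) :
  (forall x y, `|f x - f y| <= L * `|x - y|) -> continuous f.
Proof.
move=> hL x; apply/cvgrPdist_lt => e e0.
have L0 : 0 <= L by have := hL 1 0; rewrite subr0 normr1 mulr1; apply: le_trans.
exists (e / (L + 1)) => /=; first by rewrite divr_gt0 //; lra.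
move=> y /= hy; apply: (le_lt_trans (hL x y)).
have hy' : `|x - y| * (L + 1) < e by rewrite -ltr_pdivlMr //; lra.
have : 0 <= `|x - y| by [].
nra.
Qed.

Lemma cont_sum (T : topologicalType) n (F : 'I_n -> T -> R) x :
  (forall j, {for x, continuous (F j)}) ->
  {for x, continuous (fun y => \sum_(j < n) F j y)}.
Proof.
move=> Fc.
have : forall s : seq 'I_n, {for x, continuous (fun y => \sum_(j <- s) F j y)}.
  elim=> [|a s IH].
    rewrite (_ : (fun y => \sum_(j <- [::]) F j y) = fun=> 0).
      exact: cvg_cst.
    by apply/funext => y; rewrite big_nil.
  rewrite (_ : (fun y => \sum_(j <- a :: s) F j y) = F a + (fun y => \sum_(j <- s) F j y)).
    exact: continuousD.
  by apply/funext => y; rewrite big_cons.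
by move=> /(_ (index_enum _)).
Qed.

Lemma vel_up (w k r K L Sb Sx x b M : R) : 0 < k -> 0 <= r <= K -> 0 <= L ->
  w <= M -> k * r * Sb <= - M -> Sx - Sb <= L * (x - b) -> b < x ->
  w + k * r * Sx <= k * K * L * (x - b).
Proof.
move=> k0 /andP[r0 rK] L0 wM hS hL bx.
have kr0 : 0 <= k * r by rewrite mulr_ge0 // ltW.
have e1 : k * r * (Sx - Sb) <= k * r * (L * (x - b)) by apply: ler_wpM2l.
have e2 : k * r * (L * (x - b)) <= k * K * (L * (x - b)).
  apply: ler_wpM2r; first by rewrite mulr_ge0 //; lra.
  by apply: ler_wpM2l => //; rewrite ltW.
have : k * r * Sx = k * r * Sb + k * r * (Sx - Sb) by ring.
have : k * K * L * (x - b) = k * K * (L * (x - b)) by ring.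
lra.
Qed.

Lemma vel_lo (w k r K L Sb Sx x b M : R) : 0 < k -> 0 <= r <= K -> 0 <= L ->
  - M <= w -> M <= k * r * Sb -> Sb - Sx <= L * (b - x) -> x < b ->
  - (w + k * r * Sx) <= k * K * L * (- x - - b).
Proof.
move=> k0 /andP[r0 rK] L0 wM hS hL bx.
have kr0 : 0 <= k * r by rewrite mulr_ge0 // ltW.
have e1 : k * r * (Sb - Sx) <= k * r * (L * (b - x)) by apply: ler_wpM2l.
have e2 : k * r * (L * (b - x)) <= k * K * (L * (b - x)).
  apply: ler_wpM2r; first by rewrite mulr_ge0 //; lra.
  by apply: ler_wpM2l => //; rewrite ltW.
have : k * r * Sx = k * r * Sb - k * r * (Sb - Sx) by ring.
have : k * K * L * (- x - - b) = k * K * (L * (b - x)) by ring.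
lra.
Qed.

Lemma krS_up (k r rho Sb c1P M : R) : 0 < k -> 0 <= rho -> rho <= r -> 0 <= c1P ->
  Sb <= - c1P -> k * rho * c1P = M -> k * r * Sb <= - M.
Proof.
move=> k0 r0 rr c0 hS hM.
have e1 : k * r * Sb <= k * r * (- c1P).
  by apply: ler_wpM2l => //; apply: mulr_ge0; lra.
have e2 : k * rho * c1P <= k * r * c1P.
  by apply: ler_wpM2r => //; apply: ler_wpM2l => //; rewrite ltW.
have : k * r * (- c1P) = - (k * r * c1P) by ring.
lra.
Qed.

Lemma krS_lo (k r rho Sb c1P M : R) : 0 < k -> 0 <= rho -> rho <= r -> 0 <= c1P ->
  c1P <= Sb -> k * rho * c1P = M -> M <= k * r * Sb.
Proof.
move=> k0 r0 rr c0 hS hM.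
have e1 : k * r * c1P <= k * r * Sb.
  by apply: ler_wpM2l => //; apply: mulr_ge0; lra.
have e2 : k * rho * c1P <= k * r * c1P.
  by apply: ler_wpM2r => //; apply: ler_wpM2l => //; rewrite ltW.
lra.
Qed.

Lemma choose_levels (y a d : R) : 0 < a -> a < pi - d -> 0 <= d ->
  - pi + d <= y <= pi - d -> exists U0 L0,
      [/\ a <= U0 <= pi - d, y <= U0, - pi + d <= L0 <= - a, L0 <= y
          & U0 - L0 < 2 * pi].
Proof.
move=> a0 ad d0 /andP[y1 y2]; have pi0 : 0 < pi :> R := pi_gt0 R.
have [ay|ya] := leP a y.
  by exists y, (- a); split; try lra; apply/andP; split; lra.
have [yb|by_] := leP y (- a).
  by exists a, y; split; try lra; apply/andP; split; lra.
by exists a, (- a); split; try lra; apply/andP; split; lra.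
Qed.

Lemma barrier_up (f Rt S : R -> R) (w kap K L rho c1dp M t0 T b : R) :
  0 < kap -> 0 <= rho -> 0 <= L -> 0 <= c1dp -> kap * rho * c1dp = M -> w <= M ->
  0 <= kap * K * L ->
  (forall t, 0 <= Rt t <= K) ->
  (forall x y, `|S x - S y| <= L * `|x - y|) ->
  S b <= - c1dp ->
  {within `[t0, +oo[, continuous f} ->
  (forall t, t0 < t -> is_derive t 1 f (w + kap * Rt t * S (f t))) ->
  (forall t, t0 < t < T -> rho <= Rt t) ->
  f t0 <= b -> forall t, t0 <= t <= T -> f t <= b.
Proof.
move=> k0 r0 L0 c0 hM wM C0 Rb hL Sb cf df hR f0.
apply: (barrier (g := fun t => w + kap * Rt t * S (f t)) C0 cf df) => //.
move=> t tI bt.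
apply: (vel_up (Sb := S b) (M := M)) => //.
- apply: (krS_up (rho := rho) (c1P := c1dp)) => //.
  exact: hR.
- rewrite -[X in _ <= _ * X]gtr0_norm ?subr_gt0 //.
  exact: le_trans (ler_norm _) (hL _ _).
Qed.

Lemma barrier_lo (f Rt S : R -> R) (w kap K L rho c1dp M t0 T b : R) :
  0 < kap -> 0 <= rho -> 0 <= L -> 0 <= c1dp -> kap * rho * c1dp = M -> - M <= w ->
  0 <= kap * K * L ->
  (forall t, 0 <= Rt t <= K) ->
  (forall x y, `|S x - S y| <= L * `|x - y|) ->
  c1dp <= S b ->
  {within `[t0, +oo[, continuous f} ->
  (forall t, t0 < t -> is_derive t 1 f (w + kap * Rt t * S (f t))) ->
  (forall t, t0 < t < T -> rho <= Rt t) ->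
  b <= f t0 -> forall t, t0 <= t <= T -> b <= f t.
Proof.
move=> k0 r0 L0 c0 hM wM C0 Rb hL Sb cf df hR f0 t tI.
rewrite -lerN2.
have cf' : {within `[t0, +oo[, continuous (fun t => - f t)}.
  by move=> x; apply: continuousN; exact: cf.
have df' : forall t, t0 < t -> is_derive t 1 (fun t => - f t) (- (w + kap * Rt t * S (f t))).
  by move=> u ut; apply: is_deriveN; exact: df.
apply: (barrier (g := fun t => - (w + kap * Rt t * S (f t))) (T := T) C0 cf' df') => //; last by rewrite /= lerN2.
move=> u uI bu.
have bu' : f u < b by rewrite -ltrN2.
apply: (vel_lo (Sb := S b) (M := M)) => //.
- apply: (krS_lo (rho := rho) (c1P := c1dp)) => //.
  exact: hR.
- rewrite -[X in _ <= _ * X]gtr0_norm ?subr_gt0 //.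
  exact: le_trans (ler_norm _) (hL _ _).
Qed.
End Aux.

Unset Implicit Arguments.
Set Strict Implicit.

Theorem proposition2p19 (R : realType) (S I : R -> R)
  (alpha0 p q c1 c2 c3 : R) (N : nat) (omega : 'I_N -> R) (kappa : R)
  (theta : 'I_N -> R -> R) (rho : R) (A B : {set 'I_N}) :
  periodic2pi S -> periodic2pi I -> lipschitz_fun S -> lipschitz_fun I ->
  0 < alpha0 < pi -> 1 <= p -> 1 <= q -> 0 < c1 -> 0 < c2 -> 0 < c3 <= 1 ->
  (forall th, alpha0 <= th <= pi -> S th <= - (c1 * powR (pi - th) p)) ->
  (forall th, - pi <= th <= - alpha0 -> S th >= c1 * powR (th + pi) p) ->
  (forall th, - pi <= th <= pi -> 0 <= I th <= c2 * powR (pi - `|th|) q) ->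
  (forall th, - pi <= th <= pi ->
     forall phi, `|phi| <= Num.max `|th| alpha0 -> I phi >= c3 * I th) ->
  (* theta solves the ODE on [0, +oo), right-continuous at 0 *)
  (forall (i : 'I_N) (t : R), 0 < t ->
     is_derive t 1 (theta i)
       (omega i + kappa / N%:R * \sum_(j < N) I (theta j t) * S (theta i t))) ->
  (forall i : 'I_N, theta i t @[t --> (0:R)^'+] --> theta i 0) ->
  0 < rho -> rho <= supnorm I ->
  A \subset B ->
  (N%:R)^-1 * \sum_(i in A) I (theta i 0) > rho / c3 ->
  kappa > maxabs omega B / (rho * c1 * powR (pi - alpha0) p) ->
  let d := powR (maxabs omega B / (kappa * rho * c1)) (p^-1) in
  (forall i, i \in A -> - pi + d <= theta i 0 <= pi - d) ->
  (forall t, 0 <= t -> orderR I theta t > rho) /\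
  (forall i t, i \in A -> 0 <= t -> - pi + d <= theta i t <= pi - d) /\
  (forall i, i \in B ->
     (ereal_sup [set (theta i t)%:E | t in [set t : R | (0 <= t)%R]]
      - ereal_inf [set (theta i t)%:E | t in [set t : R | (0 <= t)%R]] < (2 * pi)%:E)%E).
Proof.
move=> perS perI [LS hLS] [LI hLI] /andP[a0 api] p1 q1 c10 c20 /andP[c30 c31].
move=> SU SL Ibd Ic3 dth th0 rho0 rhosup AB hA hkap d hd.
have pi0 : 0 < pi :> R := pi_gt0 R.
have LS0 : 0 <= LS by have := hLS 1 0; rewrite subr0 normr1 mulr1; apply: le_trans.
have cS : continuous S := lip_cont hLS.
have cI : continuous I := lip_cont hLI.
set K := c2 * powR pi q.
have Ibnd : forall x, 0 <= I x <= K.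
  move=> x; have [k /andP[k1 k2]] := reduce_mod x (- pi).
  have -> : I x = I (x - 2 * pi * k%:~R) by rewrite -{1}[x](subrK (2 * pi * k%:~R)) per_int.
  have /Ibd /andP[I0 I1] : - pi <= x - 2 * pi * k%:~R <= pi by rewrite k1 /=; lra.
  rewrite I0 /= (le_trans I1) // /K ler_pM2l //.
  have q0 : 0 <= q by lra.
  apply: (ge0_ler_powR q0); rewrite ?nnegrE; try lra.
    by rewrite subr_ge0 ler_norml; apply/andP; split; lra.
  by rewrite gerBl normr_ge0.
have N0 : (0 < N)%N.
  rewrite lt0n; apply/negP => /eqP N0; have N0R : (N%:R : R) = 0 by rewrite N0.
  move: hA; rewrite N0R invr0 mul0r.
  by rewrite ltNge divr_ge0 // ltW.
set M := maxabs omega B.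
have M0 : 0 <= M by apply: bigmax_ge_id.
have hM : forall i, i \in B -> `|omega i| <= M by move=> i iB; apply: le_bigmax_cond.
have P0 : 0 < powR (pi - alpha0) p by apply: powR_gt0; lra.
have kap0 : 0 < kappa.
  apply: le_lt_trans hkap; apply: divr_ge0 => //; rewrite !mulr_ge0 // ltW //.
have p0 : p != 0 by apply/eqP => p0; move: p1; rewrite p0; lra.
have dP : powR d p = M / (kappa * rho * c1).
  rewrite /d -powRrM mulVf // powRr1 // divr_ge0 // !mulr_ge0 // ltW //.
have hMd : kappa * rho * c1 * powR d p = M.
  by rewrite dP mulrC divfK // !mulf_neq0 // gt_eqF.
have d0 : 0 <= d by apply: powR_ge0.
have dlt : d < pi - alpha0.
  rewrite ltNge; apply/negP => hd'.
  have : powR (pi - alpha0) p <= powR d p.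
    have pp0 : 0 <= p by lra.
    by apply: (ge0_ler_powR pp0); rewrite ?nnegrE; lra.
  rewrite dP ler_pdivlMr ?mulr_gt0 //.
  move: hkap; rewrite ltr_pdivrMr ?mulr_gt0 //.
  have : 0 < kappa * rho * c1 * powR (pi - alpha0) p by rewrite !mulr_gt0.
  move=> h1 h2 h3.
  have e : kappa * (rho * c1 * powR (pi - alpha0) p) = powR (pi - alpha0) p * (kappa * rho * c1) by ring.
  have eM : M = maxabs omega B by []. lra.
set Rt := orderR I theta.
have dth' : forall (i : 'I_N) (t : R), 0 < t ->
    is_derive t 1 (theta i) (omega i + kappa * Rt t * S (theta i t)).
  move=> i t t0.
  have -> : omega i + kappa * Rt t * S (theta i t) =
      omega i + kappa / N%:R * \sum_(j < N) I (theta j t) * S (theta i t).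
    by rewrite /Rt /orderR -mulr_suml; ring.
  exact: dth.
have NR0 : (N%:R : R) != 0 by rewrite pnatr_eq0 -lt0n.
have Rbnd : forall t, 0 <= Rt t <= K.
  move=> t; rewrite /Rt /orderR; apply/andP; split.
    by rewrite mulr_ge0 ?invr_ge0 ?ler0n // sumr_ge0 // => j _; case/andP: (Ibnd (theta j t)).
  have : \sum_(j < N) I (theta j t) <= \sum_(j < N) K.
    by apply: ler_sum => j _; case/andP: (Ibnd (theta j t)).
  rewrite sumr_const card_ord => h; rewrite -mulr_natl in h.
  by rewrite -(ler_pM2l (_ : 0 < N%:R)) ?ltr0n // mulrA mulfV // mul1r.
have cth : forall i, {within `[0, +oo[, continuous (theta i)}.
  move=> i; apply/continuous_within_itvcyP; split; last exact: th0.
  move=> x; rewrite in_itv /= andbT => x0.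
  have hD := dth i x x0.
  apply/differentiable_continuous/derivable1_diffP; exact: ex_derive.
have cR : {within `[0, +oo[, continuous Rt}.
  move=> x.
  have hs : {for x, continuous (from_subspace `[0, +oo[ (fun y => \sum_(j < N) I (theta j y)))}.
    apply: cont_sum => j.
    exact: (@continuous_comp _ _ _ (from_subspace _ (theta j)) I x (cth j x) (cI _)).
  have h := @continuousM R _ (fun=> N%:R^-1) _ x (cvg_cst _) hs.
  exact: h.
have C0 : 0 <= kappa * K * LS.
  have K0 : 0 <= K by case/andP: (Ibnd 0) => h1 h2; exact: le_trans h1 h2.
  exact: mulr_ge0 (mulr_ge0 (ltW kap0) K0) LS0.
have cW : forall i t0, 0 <= t0 -> {within `[t0, +oo[, continuous (theta i)}.
  move=> i t0 t00; apply: continuous_subspaceW (cth i).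
  by move=> x; rewrite /= !in_itv /= !andbT => /(le_trans t00).
have pp0 : 0 <= p by lra.
have hMd' : kappa * rho * (c1 * powR d p) = M by rewrite mulrA hMd.
have c1dp0 : 0 <= c1 * powR d p by rewrite mulr_ge0 ?powR_ge0 // ltW.
have UB : forall i t0 T b, i \in B -> 0 <= t0 ->
    (forall t, t0 < t < T -> rho <= Rt t) ->
    (exists b0 (k : int), b = b0 + 2 * pi * k%:~R /\ alpha0 <= b0 <= pi - d) ->
    theta i t0 <= b -> forall t, t0 <= t <= T -> theta i t <= b.
  move=> i t0 T b iB t00 hR [b0 [k [-> /andP[b01 b02]]]] h0.
  have Sb : S (b0 + 2 * pi * k%:~R) <= - (c1 * powR d p).
    rewrite per_int //; apply: (le_trans (SU b0 _)).
      by rewrite b01 /= (le_trans b02) // gerBl.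
    rewrite lerN2 ler_pM2l //; apply: (ge0_ler_powR pp0); rewrite ?nnegrE //.
      by rewrite subr_ge0 (le_trans b02) // gerBl.
    by rewrite lerBrDl -lerBrDr.
  have wM : omega i <= M := le_trans (ler_norm _) (hM i iB).
  exact: (@barrier_up _ (theta i) Rt S (omega i) kappa K LS rho (c1 * powR d p) M t0 T _
    kap0 (ltW rho0) LS0 c1dp0 hMd' wM C0 Rbnd hLS Sb (cW i t0 t00)
    (fun t tt0 => dth' i t (le_lt_trans t00 tt0)) hR h0).
have LB : forall i t0 T b, i \in B -> 0 <= t0 ->
    (forall t, t0 < t < T -> rho <= Rt t) ->
    (exists b0 (k : int), b = b0 + 2 * pi * k%:~R /\ - pi + d <= b0 <= - alpha0) ->
    b <= theta i t0 -> forall t, t0 <= t <= T -> b <= theta i t.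
  move=> i t0 T b iB t00 hR [b0 [k [-> /andP[b01 b02]]]] h0.
  have Sb : c1 * powR d p <= S (b0 + 2 * pi * k%:~R).
    rewrite per_int //; apply: le_trans (SL b0 _); last first.
      rewrite b02 andbT (le_trans _ b01) // lerDl //.
    rewrite ler_pM2l //; apply: (ge0_ler_powR pp0); rewrite ?nnegrE //.
      by clear -b01 d0; lra.
    by clear -b01; lra.
  have wM : - M <= omega i by have := hM i iB; rewrite ler_norml => /andP[].
  exact: (@barrier_lo _ (theta i) Rt S (omega i) kappa K LS rho (c1 * powR d p) M t0 T _
    kap0 (ltW rho0) LS0 c1dp0 hMd' wM C0 Rbnd hLS Sb (cW i t0 t00)
    (fun t tt0 => dth' i t (le_lt_trans t00 tt0)) hR h0).
have mfacts : forall i, i \in A -> alpha0 <= Num.max `|theta i 0| alpha0 <= pi - d.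
  move=> i iA; have /andP[h1 h2] := hd i iA.
  rewrite le_max lexx orbT /= ge_max; apply/andP; split; last by clear -dlt; lra.
  by rewrite ler_norml; apply/andP; split; clear -h1 h2; lra.
have bandA : forall T, (forall t, 0 < t < T -> rho <= Rt t) ->
    forall i t, i \in A -> 0 <= t <= T -> `|theta i t| <= Num.max `|theta i 0| alpha0.
  move=> T hR i t iA /andP[t0 tT].
  have iB : i \in B by move/fintype.subsetP: AB; apply.
  have /andP[mA mB] := mfacts i iA.
  have : `|theta i 0| <= Num.max `|theta i 0| alpha0 by rewrite le_max lexx.
  rewrite ler_norml => /andP[m1 m2].
  set m := Num.max `|theta i 0| alpha0 in mA mB m1 m2 *.
  rewrite ler_norml; apply/andP; split.
  - apply: (LB i 0 T (- m)) => //; last by rewrite t0 tT.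
    exists (- m), 0; split; first by rewrite mulr0z mulr0 addr0.
    by apply/andP; split; clear -mA mB; lra.
  - apply: (UB i 0 T m) => //; last by rewrite t0 tT.
    exists m, 0; split; first by rewrite mulr0z mulr0 addr0.
    by rewrite mA mB.
set Q := N%:R^-1 * \sum_(i in A) I (theta i 0).
have lowR : forall T, (forall t, 0 < t < T -> rho <= Rt t) ->
    forall t, 0 <= t <= T -> c3 * Q <= Rt t.
  move=> T hR t tT.
  rewrite /Rt /orderR /Q mulrCA ler_pM2l ?invr_gt0 ?ltr0n // mulr_sumr.
  apply: (@le_trans _ _ (\sum_(i in A) I (theta i t))).
    apply: ler_sum => i iA; apply: Ic3; first by have /andP[h1 h2] := hd i iA; apply/andP; split; clear -h1 h2 d0; lra.
    exact: bandA hR i t iA tT.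
  rewrite [X in _ <= X](bigID (fun j => j \in A)) /= lerDl sumr_ge0 // => j _.
  by case/andP: (Ibnd (theta j t)).
have cQ : rho < c3 * Q.
  have e : rho = c3 * (rho / c3) by rewrite mulrC divfK // gt_eqF.
  by rewrite [X in X < _]e ltr_pM2l.
have partA : forall t, 0 <= t -> rho < Rt t.
  move=> t1 t10; rewrite ltNge; apply/negP => Rt1.
  have R0 : rho < Rt 0.
    apply: lt_le_trans cQ (lowR 0 _ 0 _); last by rewrite lexx.
    by move=> t /andP[a b]; move: (lt_trans a b); rewrite ltxx.
  have ch : {within `[0, t1], continuous (fun t => Rt t - rho)}.
    have cR' : {within `[0, t1], continuous Rt}.
      apply: continuous_subspaceW cR.
      by move=> x; rewrite /= !in_itv /= => /andP[-> _].
    move=> x; have h := @continuousB R R^o _ (from_subspace `[0, t1] Rt) (fun=> rho) x (cR' x) (cvg_cst _).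
    exact: h.
  have hR0 : 0 < Rt 0 - rho by rewrite subr_gt0.
  have hR1 : Rt t1 - rho <= 0 by rewrite subr_le0.
  have [s [/andP[s0 st1] hs hbefore]] := first_time t10 ch hR0 hR1.
  have hR : forall t, 0 < t < s -> rho <= Rt t.
    move=> t /andP[a b]; have := hbefore t; rewrite (ltW a) b => /(_ isT).
    by rewrite subr_gt0 => /ltW.
  have := lowR s hR s; rewrite lexx (ltW s0) => /(_ isT) h.
  have := lt_le_trans cQ h; rewrite ltNge; move: hs; rewrite subr_le0 => ->.
  by [].
split; first exact: partA.
have hRall : forall T t, 0 < t < T -> rho <= Rt t by move=> T t /andP[a _]; exact/ltW/partA/ltW.
split.
  move=> i t iA t0.
  have := bandA t (hRall t) i t iA; rewrite t0 lexx => /(_ isT).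
  have /andP[mA mB] := mfacts i iA.
  rewrite ler_norml => /andP[h1 h2]; apply/andP; split; clear -h1 h2 mB; lra.
move=> i iB.
have hR' : forall t0 T, 0 <= t0 -> forall u, t0 < u < T -> rho <= Rt u.
  by move=> t0 T t00 u /andP[a _]; apply/ltW/partA; exact: le_trans t00 (ltW a).
have UB' : forall t0 b, 0 <= t0 ->
    (exists b0 (k : int), b = b0 + 2 * pi * k%:~R /\ alpha0 <= b0 <= pi - d) ->
    theta i t0 <= b -> forall t, t0 <= t -> theta i t <= b.
  move=> t0 b t00 hb h0 t tt.
  by apply: (UB i t0 t b iB t00 (hR' t0 t t00) hb h0 t); rewrite tt lexx.
have LB' : forall t0 b, 0 <= t0 ->
    (exists b0 (k : int), b = b0 + 2 * pi * k%:~R /\ - pi + d <= b0 <= - alpha0) ->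
    b <= theta i t0 -> forall t, t0 <= t -> b <= theta i t.
  move=> t0 b t00 hb h0 t tt.
  by apply: (LB i t0 t b iB t00 (hR' t0 t t00) hb h0 t); rewrite tt lexx.
have cWi : forall a c, 0 <= a -> {within `[a, c], continuous (theta i)}.
  move=> a c a0'; apply: continuous_subspaceW (cW i a a0').
  by move=> x; rewrite /= !in_itv /= => /andP[-> _].
suff [L [U [hLU hbd]]] : exists L U, U - L < 2 * pi /\
    forall t, 0 <= t -> L <= theta i t <= U.
  have h1 : (ereal_sup [set (theta i t)%:E | t in [set t : R | (0 <= t)%R]] <= U%:E)%E.
    by apply: ge_ereal_sup => _ [t t0 <-]; rewrite lee_fin; case/andP: (hbd t t0).
  have h2 : (L%:E <= ereal_inf [set (theta i t)%:E | t in [set t : R | (0 <= t)%R]])%E.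
    by apply: le_ereal_inf_tmp => _ [t t0 <-]; rewrite lee_fin; case/andP: (hbd t t0).
  apply: le_lt_trans (leeB h1 h2) _.
  by rewrite -EFinB lte_fin.
have [k /andP[k1 k2]] := reduce_mod (theta i 0) (- pi + d).
clear - UB' LB' cWi dlt a0 api d0 pi0 k1 k2.
set P := 2 * pi * k%:~R in k1 k2.
have P1 : 2 * pi * (k + 1)%:~R = P + 2 * pi by rewrite intrD mulrDr mulr1.
have dpi : d < pi by lra.
set y := theta i 0 - P in k1 k2.
have ty : theta i 0 = y + P by rewrite /y subrK.
have [yle|ygt] := leP y (pi - d).
  have [||U0 [L0 [hU1 hU2 hL1 hL2 hUL]]] := @choose_levels _ y alpha0 d a0 _ d0.
  - by clear -dlt; lra.
  - by rewrite k1 yle.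
  exists (L0 + P), (U0 + P); split.
    by have -> : U0 + P - (L0 + P) = U0 - L0 by ring.
  move=> t t0; apply/andP; split.
    apply: (LB' 0) => //; last by rewrite ty lerD2r.
    by exists L0, k.
  apply: (UB' 0) => //; last by rewrite ty lerD2r.
  by exists U0, k.
have d0' : 0 < d by lra.
case: (pselect (exists t1, 0 <= t1 /\ pi + d + P <= theta i t1)) => [[t1 [t10 ht1]]|H1].
  have hlo : forall t, t1 <= t -> pi + d + P <= theta i t.
    apply: (LB' t1) => //; exists (- pi + d), (k + 1); split; last by apply/andP; split; lra.
    rewrite P1; lra.
  have hhi : forall t, 0 <= t -> theta i t <= 3 * pi - d + P.
    apply: (UB' 0) => //; last by rewrite ty; lra.
    exists (pi - d), (k + 1); split; last by apply/andP; split; lra.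
    rewrite P1; lra.
  have [m mI hm] := EVT_min t10 (cWi 0 t1 (lexx 0)).
  move: (mI); rewrite in_itv /= => /andP[m0 mt1].
  have hmlo : pi - d + P < theta i m.
    rewrite ltNge; apply/negP => hm'.
    have hb : exists b0 (k' : int), pi - d + P = b0 + 2 * pi * k'%:~R /\ alpha0 <= b0 <= pi - d.
      by exists (pi - d), k; split => //; apply/andP; split; lra.
    have := UB' m (pi - d + P) m0 hb hm' t1 mt1.
    move: ht1; lra.
  exists (Num.min (theta i m) (pi + d + P)), (3 * pi - d + P); split.
    have : pi - d + P < Num.min (theta i m) (pi + d + P) by rewrite lt_min hmlo /=; lra.
    lra.
  move=> t t0; rewrite hhi // andbT ge_min.
  have [tt1|tt1] := leP t t1.
    by rewrite hm // in_itv /= t0 tt1.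
  by rewrite hlo ?orbT // ltW.
case: (pselect (exists t2, 0 <= t2 /\ theta i t2 <= pi - d + P)) => [[t2 [t20 ht2]]|H2].
  have hhi : forall t, t2 <= t -> theta i t <= pi - d + P.
    apply: (UB' t2) => //; exists (pi - d), k; split => //; apply/andP; split; lra.
  have hlo : forall t, 0 <= t -> - pi + d + P <= theta i t.
    apply: (LB' 0) => //; last by rewrite ty; lra.
    exists (- pi + d), k; split => //; apply/andP; split; lra.
  have [m mI hm] := EVT_max t20 (cWi 0 t2 (lexx 0)).
  move: (mI); rewrite in_itv /= => /andP[m0 mt2].
  have hmhi : theta i m < pi + d + P.
    rewrite ltNge; apply/negP => hm'.
    have : exists b0 (k' : int), pi + d + P = b0 + 2 * pi * k'%:~R /\ - pi + d <= b0 <= - alpha0.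
      exists (- pi + d), (k + 1); split; last by apply/andP; split; lra.
      rewrite P1; lra.
    move=> hb; have := LB' m (pi + d + P) m0 hb hm' t2 mt2.
    move: ht2; lra.
  exists (- pi + d + P), (Num.max (theta i m) (pi - d + P)); split.
    have : Num.max (theta i m) (pi - d + P) < pi + d + P by rewrite gt_max hmhi /=; lra.
    lra.
  move=> t t0; rewrite hlo //= le_max.
  have [tt2|tt2] := leP t t2.
    by rewrite hm // in_itv /= t0 tt2.
  by rewrite hhi ?orbT // ltW.
exists (pi - d + P), (pi + d + P); split; first lra.
move=> t t0; apply/andP; split.
  rewrite leNgt; apply/negP => h; apply: H2; exists t; split => //; exact: ltW.
rewrite leNgt; apply/negP => h; apply: H1; exists t; split => //; exact: ltW.
Qed.
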